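(* Let $q \ge 2$ be a fixed integer. For a positive integer $N$, let $p$ be the unique integer such that \[ \frac{\ln q}{q-1}\, q^{p} \le N < \frac{\ln q}{q-1}\, q^{p+1}, \] and let $n = N + p$. There exist constants $N_0$ and $d > 0$ (depending on $q$ but not on $N$ or $P$) such that for every $N > N_0$ and every word $P$ of length $p$ over a $q$-letter alphabet, \[ G_P(N) \ge \frac{d\, q^n}{n^2}. \]
   Context: Fix an alphabet of size $q$. For a word $P = a_1 a_2 \cdots a_p$ of length $p$ and a positive integer $N$, $G_P(N)$ denotes the number of $q$-ary words $a_1 a_2 \cdots a_{N+p}$ (of length $N+p$) such that the factor $a_k a_{k+1} \cdots a_{k+p-1}$ equals $P$ for $k = 1$ and for $k = N+1$, and for no other $k$ with $1 \le k \le N+1$. Equivalently, $G_P(N)$ is the number of words of length $N+p$ that begin and end with $P$ and contain exactly two occurrences of $P$ as a factor. *)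

(* Defs.v *)
(* words are lists of naturals over the alphabet {0,...,q-1}. *)
From Stdlib Require Import Reals Lra Lia Arith List Bool.
Import ListNotations.

Fixpoint words (q n : nat) : list (list nat) :=
  match n with
  | O => [ [] ]
  | S n' => flat_map (fun w => map (fun a => a :: w) (seq 0 q)) (words q n')
  end.

(* P occurs in w at (0-based) position k, i.e. the factor of w of length |P|
   starting at position k equals P (0-based k corresponds to the paper's k+1). *)
Definition occurs_at (P w : list nat) (k : nat) : bool :=
  if list_eq_dec Nat.eq_dec (firstn (length P) (skipn k w)) P then true else false.

(* G_P(N): number of q-ary words of length N + |P| such that P occurs at the
   paper's positions k = 1 and k = N+1 and at no other k with 1 <= k <= N+1. *)
Definition G (q : nat) (P : list nat) (N : nat) : nat :=
  length (filter
    (fun w => forallb (fun k => Bool.eqb (occurs_at P w k)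
                                         (Nat.eqb k 0 || Nat.eqb k N))
                      (seq 0 (N + 1)))
    (words q (N + length P))).

(* Main.v *)
Require Import Defs.
From Stdlib Require Import Reals List.
From Stdlib Require Import Lra Lia Arith Bool FinFun ZArith.
Import ListNotations.

Lemma NoDup_flat_map_gen {A B : Type} (f : A -> list B) (l : list A) :
  NoDup l -> (forall x, In x l -> NoDup (f x)) ->
  (forall x y z, In x l -> In y l -> In z (f x) -> In z (f y) -> x = y) ->
  NoDup (flat_map f l).
Proof.
  induction l as [|a l IH]; intros Hl Hf Hd; simpl; [constructor|].
  inversion Hl; subst.
  apply NoDup_app.
  - apply Hf; simpl; auto.
  - apply IH; auto. intros; apply Hf; simpl; auto.
    intros x y z Hx Hy Hz1 Hz2; apply (Hd x y z); simpl; auto.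
  - intros z Hz Hz2. apply in_flat_map in Hz2 as [y [Hy Hzy]].
    assert (a = y) by (apply (Hd a y z); simpl; auto). subst. contradiction.
Qed.

Lemma words_In (q n : nat) (w : list nat) :
  In w (words q n) <-> length w = n /\ Forall (fun a => a < q) w.
Proof.
  revert w; induction n as [|n IH]; intros w; simpl.
  - split.
    + intros [H|[]]; subst; auto.
    + intros [H _]; destruct w; simpl in *; auto; lia.
  - rewrite in_flat_map. split.
    + intros [v [Hv Hw]]. apply in_map_iff in Hw as [a [Ha Hin]]. subst.
      apply IH in Hv as [Hl Hf]. apply in_seq in Hin. simpl; split; auto.
      constructor; auto; lia.
    + intros [Hl Hf]. destruct w as [|a v]; simpl in Hl; [lia|].
      inversion Hf; subst. exists v; split.
      * apply IH; split; auto.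
      * apply in_map_iff; exists a; split; auto. apply in_seq; lia.
Qed.

Lemma words_NoDup (q n : nat) : NoDup (words q n).
Proof.
  induction n as [|n IH]; simpl.
  - constructor; auto. constructor.
  - apply NoDup_flat_map_gen; auto.
    + intros x _. apply Injective_map_NoDup.
      * intros a b H; injection H; auto.
      * apply seq_NoDup.
    + intros x y z _ _ H1 H2. apply in_map_iff in H1 as [a [<- _]].
      apply in_map_iff in H2 as [b [Hb _]]. injection Hb; auto.
Qed.

Lemma words_length (q n : nat) : length (words q n) = q ^ n.
Proof.
  induction n as [|n IH]; simpl; auto.
  rewrite (flat_map_constant_length (c:=q)).
  - rewrite IH; lia.
  - intros; rewrite length_map, length_seq; auto.
Qed.

Lemma window_app (l1 l2 : list nat) k n :
  k + n <= length l1 -> firstn n (skipn k (l1 ++ l2)) = firstn n (skipn k l1).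
Proof.
  intros H. rewrite skipn_app, firstn_app.
  rewrite length_skipn. replace (n - (length l1 - k)) with 0 by lia.
  simpl. rewrite app_nil_r; auto.
Qed.

Lemma occurs_at_iff P w k : occurs_at P w k = true <-> firstn (length P) (skipn k w) = P.
Proof.
  unfold occurs_at. destruct list_eq_dec; split; auto; discriminate.
Qed.

Lemma occurs_app P l1 l2 k : k + length P <= length l1 ->
  occurs_at P (l1 ++ l2) k = occurs_at P l1 k.
Proof.
  intros H. unfold occurs_at. rewrite window_app; auto.
Qed.

Lemma in_firstn {X} (x : X) n l : In x (firstn n l) -> In x l.
Proof. intros H. rewrite <- (firstn_skipn n l). apply in_or_app; auto. Qed.

Lemma in_skipn {X} (x : X) n l : In x (skipn n l) -> In x l.
Proof. intros H. rewrite <- (firstn_skipn n l). apply in_or_app; auto. Qed.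

Definition Good (P y : list nat) : bool :=
  forallb (fun k => negb (occurs_at P (P ++ y) k)) (seq 1 (length y)).

Definition A (q : nat) (P : list nat) (m : nat) : nat :=
  length (filter (Good P) (words q m)).

Lemma forallb_false_ex {X} (f : X -> bool) l :
  forallb f l = false -> exists x, In x l /\ f x = false.
Proof.
  induction l as [|a l IH]; simpl; [discriminate|].
  destruct (f a) eqn:E; simpl.
  - intros H; destruct (IH H) as [x [H1 H2]]; eauto.
  - intros _; eauto.
Qed.

Lemma Good_true P y : Good P y = true ->
  forall k, 1 <= k <= length y -> occurs_at P (P ++ y) k = false.
Proof.
  unfold Good. rewrite forallb_forall. intros H k Hk.
  specialize (H k). rewrite in_seq in H. apply negb_true_iff. apply H; lia.
Qed.

Lemma Good_intro P y : 
  (forall k, 1 <= k <= length y -> occurs_at P (P ++ y) k = false) -> Good P y = true.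
Proof.
  unfold Good. rewrite forallb_forall. intros H k Hk.
  rewrite in_seq in Hk. apply negb_true_iff. apply H; lia.
Qed.

Lemma Good_false P y : Good P y = false ->
  exists k, 1 <= k <= length y /\ occurs_at P (P ++ y) k = true.
Proof.
  unfold Good. intros H. apply forallb_false_ex in H as [k [Hk Hf]].
  apply in_seq in Hk. exists k; split; [lia|]. apply negb_false_iff in Hf; auto.
Qed.

Lemma Good_prefix P y z : Good P (y ++ z) = true -> Good P y = true.
Proof.
  intros H. apply Good_intro. intros k Hk.
  pose proof (Good_true P _ H k) as H2. rewrite length_app in H2.
  rewrite app_assoc in H2. rewrite occurs_app in H2; [apply H2; lia|].
  rewrite length_app; lia.
Qed.

Lemma firstn_Good P y n : Good P y = true -> Good P (firstn n y) = true.
Proof.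
  intros H. rewrite <- (firstn_skipn n y) in H. eapply Good_prefix; eauto.
Qed.

Definition ext (q : nat) (P : list nat) (m : nat) :=
  flat_map (fun y => map (fun a => y ++ [a]) (seq 0 q)) (filter (Good P) (words q m)).

Lemma ext_length q P m : length (ext q P m) = q * A q P m.
Proof.
  unfold ext, A. rewrite (flat_map_constant_length (c:=q)).
  - lia.
  - intros; rewrite length_map, length_seq; auto.
Qed.

Lemma ext_NoDup q P m : NoDup (ext q P m).
Proof.
  apply NoDup_flat_map_gen.
  - apply NoDup_filter, words_NoDup.
  - intros x _. apply Injective_map_NoDup; [|apply seq_NoDup].
    intros a b H. apply app_inj_tail in H. destruct H; auto.
  - intros x y z _ _ H1 H2. apply in_map_iff in H1 as [a [<- _]].
    apply in_map_iff in H2 as [b [Hb _]]. apply app_inj_tail in Hb. destruct Hb; auto.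
Qed.

Lemma last_decomp (w : list nat) m : length w = S m ->
  w = firstn m w ++ [nth m w 0].
Proof.
  intros H. rewrite <- (firstn_skipn m w) at 1. f_equal.
  assert (length (skipn m w) = 1) by (rewrite length_skipn; lia).
  destruct (skipn m w) as [|b [|c r]] eqn:E; simpl in *; try lia.
  rewrite <- (firstn_skipn m w) at 1. rewrite app_nth2; rewrite length_firstn; [|lia].
  replace (m - Init.Nat.min m (length w)) with 0 by lia. rewrite E; auto.
Qed.

Lemma A_step_up q P m : A q P (S m) <= q * A q P m.
Proof.
  rewrite <- ext_length. unfold A.
  apply NoDup_incl_length; [apply NoDup_filter, words_NoDup|].
  intros w Hw. apply filter_In in Hw as [Hw Hg].
  apply words_In in Hw as [Hl Hf].
  unfold ext. apply in_flat_map. exists (firstn m w). split.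
  - apply filter_In; split.
    + apply words_In; split.
      * rewrite length_firstn; lia.
      * apply Forall_forall; intros x Hx; apply in_firstn in Hx.
        rewrite Forall_forall in Hf; auto.
    + apply firstn_Good; auto.
  - apply in_map_iff. exists (nth m w 0). split.
    + symmetry; apply last_decomp; auto.
    + apply in_seq. split; [lia|]. rewrite Forall_forall in Hf. simpl.
      apply Hf. apply nth_In; lia.
Qed.

Lemma A_step_down q P m : 1 <= length P -> length P <= S m ->
  q * A q P m <= A q P (S m) + A q P (S m - length P).
Proof.
  intros Hp1 Hp. rewrite <- ext_length.
  apply (Nat.le_trans _ (length (filter (Good P) (words q (S m)) ++
     map (fun z => z ++ P) (filter (Good P) (words q (S m - length P)))))).
  2:{ unfold A. apply Nat.eq_le_incl.
        rewrite length_app, length_map. reflexivity. }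
  apply NoDup_incl_length; [apply ext_NoDup|].
  intros w Hw. unfold ext in Hw. apply in_flat_map in Hw as [y [Hy Hw]].
  apply filter_In in Hy as [Hy Hgy]. apply words_In in Hy as [Hly Hfy].
  apply in_map_iff in Hw as [a [<- Ha]]. apply in_seq in Ha.
  assert (Hww : In (y ++ [a]) (words q (S m))).
  { apply words_In; split. rewrite length_app; simpl; lia.
    apply Forall_app; split; auto. constructor; auto; lia. }
  apply in_app_iff.
  destruct (Good P (y ++ [a])) eqn:Eg.
  - left. apply filter_In; auto.
  - right. apply Good_false in Eg as [k [Hk Ho]].
    rewrite length_app in Hk; simpl in Hk.
    assert (k = S m).
    { destruct (Nat.eq_dec k (S m)); auto.
      rewrite app_assoc, occurs_app in Ho by (rewrite length_app; lia).
      rewrite (Good_true P y Hgy k) in Ho; [discriminate|lia]. }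
    subst k. apply occurs_at_iff in Ho.
    rewrite skipn_app, skipn_all2, app_nil_l in Ho by lia.
    rewrite firstn_all2 in Ho by (rewrite length_skipn, length_app; simpl length; lia).
    apply in_map_iff. exists (firstn (S m - length P) (y ++ [a])). split.
    + rewrite <- Ho at 2. apply firstn_skipn.
    + apply filter_In. split.
      * apply words_In. split. rewrite length_firstn, length_app; simpl length; lia.
        apply Forall_forall; intros x Hx; apply in_firstn in Hx.
        apply words_In in Hww. destruct Hww as [_ Hf]. rewrite Forall_forall in Hf; auto.
      * rewrite firstn_app. replace (S m - length P - length y) with 0 by lia.
        simpl. rewrite app_nil_r. apply firstn_Good; auto.
Qed.

Lemma A_le q P m : A q P m <= q ^ m.
Proof. unfold A. rewrite <- words_length. apply filter_length_le. Qed.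

Lemma A_0 q P : A q P 0 = 1.
Proof. reflexivity. Qed.

Definition period (P : list nat) (s : nat) : Prop :=
  forall i, i + s < length P -> nth i P 0 = nth (i + s) P 0.

Lemma period_iter P s : period P s -> forall t i, i + t * s < length P ->
  nth i P 0 = nth (i + t * s) P 0.
Proof.
  intros H t. induction t as [|t IH]; intros i Hi.
  - rewrite Nat.add_0_r; auto.
  - rewrite IH by lia. rewrite H by lia. f_equal. lia.
Qed.

Lemma period_sub P r s : period P r -> period P s -> r <= s -> s + r <= length P ->
  period P (s - r).
Proof.
  intros Hr Hs Hrs Hp i Hi.
  destruct (Nat.lt_ge_cases (i + s) (length P)) as [H1|H1].
  - rewrite Hs by lia. rewrite (Hr (i + (s - r))) by lia. f_equal; lia.
  - transitivity (nth (i - r) P 0).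
    { replace i with (i - r + r) at 1 by lia. symmetry. apply Hr. lia. }
    rewrite Hs by lia. f_equal; lia.
Qed.

Lemma min_exists (Q : nat -> Prop) n : Q n -> exists m, Q m /\ forall k, k < m -> ~ Q k.
Proof.
  revert Q. induction n as [n IH] using lt_wf_ind. intros Q Hn.
  destruct (Classical_Prop.classic (exists k, k < n /\ Q k)) as [[k [Hk HQ]]|H].
  - eapply IH; eauto.
  - exists n; split; auto. intros k Hk HQ; apply H; eauto.
Qed.

Lemma min_period P : 1 <= length P -> exists pi, 1 <= pi <= length P /\ period P pi /\
  forall t, 1 <= t < pi -> ~ period P t.
Proof.
  intros Hp.
  destruct (min_exists (fun s => 1 <= s /\ period P s) (length P)) as [pi [[H1 H2] H3]].
  - split; auto. intros i Hi; lia.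
  - exists pi. split; [|split; auto].
    + split; auto. destruct (Nat.le_gt_cases pi (length P)); auto.
      exfalso; apply (H3 (length P)); auto. split; auto. intros i Hi; lia.
    + intros t Ht Hpt. apply (H3 t); [lia|]. split; [lia|auto].
Qed.

Lemma period_mult P pi : 1 <= pi -> period P pi -> (forall t, 1 <= t < pi -> ~ period P t) ->
  forall s, period P s -> 1 <= s -> s + pi <= length P -> exists k, 1 <= k /\ s = k * pi.
Proof.
  intros Hpi Hp Hmin s. induction s as [s IH] using lt_wf_ind. intros Hs H1 H2.
  destruct (Nat.lt_trichotomy s pi) as [Hlt|[Heq|Hgt]].
  - exfalso; apply (Hmin s); auto.
  - exists 1; lia.
  - destruct (IH (s - pi)) as [k [Hk Hk2]]; try lia.
    + apply period_sub; auto; lia.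
    + exists (S k). simpl. lia.
Qed.

Lemma period_ge_min P pi : (forall t, 1 <= t < pi -> ~ period P t) ->
  forall s, period P s -> 1 <= s -> pi <= s.
Proof.
  intros Hmin s Hs H1. destruct (Nat.le_gt_cases pi s); auto.
  exfalso; apply (Hmin s); auto.
Qed.

Lemma list_eq_nth (l l' : list nat) : length l = length l' ->
  (forall i, i < length l -> nth i l 0 = nth i l' 0) -> l = l'.
Proof. intros; apply nth_ext with 0 0; auto. Qed.

Lemma occ_start P y j : 1 <= j < length P ->
  occurs_at P (P ++ y) j = true -> period P j /\ firstn j y = skipn (length P - j) P.
Proof.
  intros Hj Ho. apply occurs_at_iff in Ho.
  rewrite skipn_app in Ho. replace (j - length P) with 0 in Ho by lia. simpl in Ho.
  rewrite firstn_app, length_skipn in Ho.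
  replace (length P - (length P - j)) with j in Ho by lia.
  rewrite firstn_all2 in Ho by (rewrite length_skipn; lia).
  split.
  - intros i Hi.
    assert (E := f_equal (fun l => nth i l 0) Ho). simpl in E.
    rewrite app_nth1 in E by (rewrite length_skipn; lia).
    rewrite nth_skipn in E. rewrite <- E. f_equal; lia.
  - assert (E := f_equal (skipn (length P - j)) Ho). simpl in E.
    rewrite skipn_app, skipn_all2 in E by (rewrite length_skipn; lia).
    rewrite length_skipn in E. replace (length P - j - (length P - j)) with 0 in E by lia.
    simpl in E. exact E.
Qed.

Lemma occ_end P y s : 1 <= s < length P -> s <= length y ->
  occurs_at P (P ++ y ++ P) (length P + length y - s) = true ->
  period P s /\ skipn (length y - s) y = firstn s P.
Proof.
  intros Hs Hy Ho. apply occurs_at_iff in Ho.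
  rewrite skipn_app, skipn_all2 in Ho by lia. rewrite app_nil_l in Ho.
  replace (length P + length y - s - length P) with (length y - s) in Ho by lia.
  rewrite skipn_app in Ho. replace (length y - s - length y) with 0 in Ho by lia.
  rewrite skipn_O in Ho.
  rewrite firstn_app, length_skipn in Ho.
  rewrite firstn_all2 in Ho by (rewrite length_skipn; lia).
  replace (length y - (length y - s)) with s in Ho by lia.
  split.
  - intros i Hi.
    assert (E := f_equal (fun l => nth (s + i) l 0) Ho). simpl in E.
    rewrite app_nth2 in E by (rewrite length_skipn; lia).
    rewrite length_skipn in E. replace (s + i - (length y - (length y - s))) with i in E by lia.
    rewrite nth_firstn in E. destruct (Nat.ltb_spec i (length P - s)); [|lia].
    rewrite E. f_equal; lia.
  - assert (E := f_equal (firstn s) Ho). simpl in E.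
    rewrite firstn_app, length_skipn in E.
    replace (s - (length y - (length y - s))) with 0 in E by lia.
    rewrite firstn_O, app_nil_r in E.
    rewrite firstn_all2 in E by (rewrite length_skipn; lia). exact E.
Qed.

Lemma list_sum_le {X} (f : X -> nat) l B : (forall x, In x l -> f x <= B) ->
  list_sum (map f l) <= length l * B.
Proof.
  induction l as [|a l IH]; simpl; intros H; auto.
  specialize (IH (fun x Hx => H x (or_intror Hx))). specialize (H a (or_introl eq_refl)). lia.
Qed.

Lemma words_app q u v n : In v (words q n) -> Forall (fun a => a < q) u ->
  In (u ++ v) (words q (length u + n)).
Proof.
  intros Hv Hu. apply words_In in Hv as [H1 H2]. apply words_In. split.
  - rewrite length_app; lia.
  - apply Forall_app; auto.
Qed.

Lemma Forall_firstn' {X} (Q : X -> Prop) n l : Forall Q l -> Forall Q (firstn n l).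
Proof. rewrite !Forall_forall. intros H x Hx. apply H. eapply in_firstn; eauto. Qed.
Lemma Forall_skipn' {X} (Q : X -> Prop) n l : Forall Q l -> Forall Q (skipn n l).
Proof. rewrite !Forall_forall. intros H x Hx. apply H. eapply in_skipn; eauto. Qed.

Lemma period_block_start P pi k : period P pi -> 1 <= k -> k * pi <= length P ->
  firstn pi (skipn (length P - k * pi) P) = skipn (length P - pi) P.
Proof.
  intros Hp Hk Hkp. apply list_eq_nth.
  - rewrite length_firstn, !length_skipn. nia.
  - intros i Hi. rewrite length_firstn, length_skipn in Hi.
    rewrite nth_firstn. destruct (Nat.ltb_spec i pi); [|lia].
    rewrite !nth_skipn. destruct k as [|k']; [lia|].
    rewrite (period_iter P pi Hp k' (length P - S k' * pi + i)) by (simpl in *; nia).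
    f_equal. simpl in *. nia.
Qed.

Lemma period_block_end P pi k : period P pi -> 1 <= k -> k * pi <= length P ->
  skipn (k * pi - pi) (firstn (k * pi) P) = firstn pi P.
Proof.
  intros Hp Hk Hkp. apply list_eq_nth.
  - rewrite length_skipn, !length_firstn. nia.
  - intros i Hi. rewrite length_skipn, length_firstn in Hi.
    rewrite nth_skipn, !nth_firstn.
    destruct (Nat.ltb_spec (k * pi - pi + i) (k * pi)); [|lia].
    destruct (Nat.ltb_spec i pi); [|nia].
    destruct k as [|k']; [lia|].
    rewrite (period_iter P pi Hp k' i) by (simpl in *; nia). f_equal. simpl in *. nia.
Qed.

Lemma base_bound q P pi : 1 <= q -> 1 <= length P -> Forall (fun a => a < q) P ->
  1 <= pi <= length P -> period P pi -> (forall t, 1 <= t < pi -> ~ period P t) ->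
  let s0 := Nat.max pi (length P - pi + 1) in
  length (filter (fun y => negb (Good P y)) (words q (length P - 1))) <=
    q ^ (length P - 1 - pi) + (length P - s0) * q ^ (length P - 1 - s0).
Proof.
  intros Hq Hp HP Hpi Hper Hmin s0.
  set (L1 := map (fun v => skipn ((length P) - pi) P ++ v) (words q ((length P) - 1 - pi))).
  set (L2 := flat_map (fun j => map (fun v => skipn ((length P) - j) P ++ v) (words q ((length P) - 1 - j)))
                      (seq s0 ((length P) - s0))).
  apply (Nat.le_trans _ (length (L1 ++ L2))).
  - apply NoDup_incl_length; [apply NoDup_filter, words_NoDup|].
    intros y Hy. apply filter_In in Hy as [Hy Hg]. apply negb_true_iff in Hg.
    apply Good_false in Hg as [j [Hj Ho]].
    pose proof Hy as Hy'. apply words_In in Hy' as [Hly Hfy].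
    apply occ_start in Ho as [Hpj Hfj]; [|lia].
    apply in_app_iff.
    destruct (Nat.le_gt_cases (j + pi) (length P)) as [Hc|Hc].
    + left. destruct (period_mult P pi ltac:(lia) Hper Hmin j Hpj ltac:(lia) Hc) as [k [Hk ->]].
      apply in_map_iff. exists (skipn pi y). split.
      * rewrite <- (period_block_start P pi k Hper Hk) by lia.
        rewrite <- Hfj. rewrite firstn_firstn. replace (Nat.min pi (k * pi)) with pi by nia.
        apply firstn_skipn.
      * apply words_In. split. rewrite length_skipn; lia. apply Forall_skipn'; auto.
    + right. apply in_flat_map. exists j. split.
      * apply in_seq. pose proof (period_ge_min P pi Hmin j Hpj ltac:(lia)). unfold s0. lia.
      * apply in_map_iff. exists (skipn j y). split.
        -- rewrite <- Hfj. apply firstn_skipn.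
        -- apply words_In. split. rewrite length_skipn; lia. apply Forall_skipn'; auto.
  - rewrite length_app. unfold L1. rewrite length_map, words_length.
    apply Nat.add_le_mono_l. unfold L2. rewrite length_flat_map.
    eapply Nat.le_trans; [apply (list_sum_le _ _ (q ^ ((length P) - 1 - s0)))|].
    + intros j Hj. rewrite length_map, words_length. apply in_seq in Hj.
      apply Nat.pow_le_mono_r; lia.
    + rewrite length_seq. lia.
Qed.

Definition Bad (P y : list nat) : bool :=
  existsb (fun s => occurs_at P (P ++ y ++ P) (length P + length y - s)) (seq 1 (length P - 1)).

Lemma G_ge q P M : 1 <= length P -> Forall (fun a => a < q) P ->
  length (filter (fun y => negb (Bad P y)) (filter (Good P) (words q M))) <= G q P (length P + M).
Proof.
  intros Hp HP. unfold G.
  rewrite <- (length_map (fun y => P ++ y ++ P)).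
  apply NoDup_incl_length.
  - apply Injective_map_NoDup.
    + intros y1 y2 H. apply app_inv_head in H. apply app_inv_tail in H. auto.
    + apply NoDup_filter, NoDup_filter, words_NoDup.
  - intros w Hw. apply in_map_iff in Hw as [y [<- Hy]].
    apply filter_In in Hy as [Hy Hb]. apply filter_In in Hy as [Hy Hg].
    apply negb_true_iff in Hb.
    pose proof Hy as Hy'. apply words_In in Hy' as [Hly Hfy].
    apply filter_In. split.
    + apply words_In. split.
      * rewrite !length_app. lia.
      * apply Forall_app; split; auto. apply Forall_app; split; auto.
    + apply forallb_forall. intros k Hk. apply in_seq in Hk.
      apply Bool.eqb_true_iff.
      destruct (Nat.eq_dec k 0) as [->|Hk0].
      * simpl. apply occurs_at_iff. rewrite skipn_O, firstn_app, firstn_all.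
        rewrite Nat.sub_diag, firstn_O, app_nil_r. reflexivity.
      * destruct (Nat.eq_dec k (length P + M)) as [->|HkN].
        -- rewrite Nat.eqb_refl, orb_true_r. apply occurs_at_iff.
           rewrite app_assoc, skipn_app, skipn_all2 by (rewrite length_app; lia).
           rewrite length_app. replace (length P + M - (length P + length y)) with 0 by lia.
           simpl. apply firstn_all.
        -- pose proof Hk0 as Hk0'. pose proof HkN as HkN'.
           apply Nat.eqb_neq in Hk0'. apply Nat.eqb_neq in HkN'. rewrite Hk0', HkN'. simpl.
           destruct (Nat.le_gt_cases k M) as [HkM|HkM].
           ++ rewrite app_assoc, occurs_app by (rewrite length_app; lia).
              apply (Good_true P y Hg). lia.
           ++ destruct (occurs_at P (P ++ y ++ P) k) eqn:E; auto.
              exfalso. assert (Hbt : Bad P y = true); [|congruence].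
              apply existsb_exists. exists (length P + M - k). split.
              ** apply in_seq. lia.
              ** rewrite Hly. replace (length P + M - (length P + M - k)) with k by lia. exact E.
Qed.

Lemma Bad_bound q P pi M : 1 <= q -> 1 <= length P -> length P <= M ->
  1 <= pi <= length P -> period P pi -> (forall t, 1 <= t < pi -> ~ period P t) ->
  let s0 := Nat.max pi (length P - pi + 1) in
  length (filter (Bad P) (filter (Good P) (words q M))) <=
    A q P (M - pi) + (length P - s0) * q ^ (M - s0).
Proof.
  intros Hq Hp HM Hpi Hper Hmin s0.
  set (L1 := map (fun z => z ++ firstn pi P) (filter (Good P) (words q (M - pi)))).
  set (L2 := flat_map (fun s => map (fun z => z ++ firstn s P) (filter (Good P) (words q (M - s))))
                      (seq s0 (length P - s0))).
  apply (Nat.le_trans _ (length (L1 ++ L2))).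
  - apply NoDup_incl_length; [apply NoDup_filter, NoDup_filter, words_NoDup|].
    intros y Hy. apply filter_In in Hy as [Hy Hb]. apply filter_In in Hy as [Hy Hg].
    pose proof Hy as Hy'. apply words_In in Hy' as [Hly Hfy].
    apply existsb_exists in Hb as [s [Hs Ho]]. apply in_seq in Hs.
    apply occ_end in Ho as [Hps Hfs]; [|lia|lia].
    assert (Hz : forall t, t <= M -> In (firstn (M - t) y) (filter (Good P) (words q (M - t)))).
    { intros t Ht. apply filter_In. split.
      - apply words_In. split. rewrite length_firstn; lia. apply Forall_firstn'; auto.
      - apply firstn_Good; auto. }
    apply in_app_iff.
    destruct (Nat.le_gt_cases (s + pi) (length P)) as [Hc|Hc].
    + left. destruct (period_mult P pi ltac:(lia) Hper Hmin s Hps ltac:(lia) Hc) as [k [Hk ->]].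
      apply in_map_iff. exists (firstn (M - pi) y). split; [|apply Hz; lia].
      rewrite <- (period_block_end P pi k Hper Hk) by lia.
      rewrite <- Hfs. rewrite skipn_skipn. rewrite Hly.
      replace (k * pi - pi + (M - k * pi)) with (M - pi) by nia.
      apply firstn_skipn.
    + right. apply in_flat_map. exists s. split.
      * apply in_seq. pose proof (period_ge_min P pi Hmin s Hps ltac:(lia)). unfold s0. lia.
      * apply in_map_iff. exists (firstn (M - s) y). split; [|apply Hz; lia].
        rewrite <- Hfs. rewrite Hly. apply firstn_skipn.
  - rewrite length_app. unfold L1. rewrite length_map. fold (A q P (M - pi)).
    apply Nat.add_le_mono_l. unfold L2. rewrite length_flat_map.
    eapply Nat.le_trans; [apply (list_sum_le _ _ (q ^ (M - s0)))|].
    + intros s Hs. rewrite length_map. apply in_seq in Hs.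
      eapply Nat.le_trans; [apply A_le|]. apply Nat.pow_le_mono_r; lia.
    + rewrite length_seq. lia.
Qed.

Lemma G_lower q P pi M : 1 <= q -> 1 <= length P -> length P <= M -> Forall (fun a => a < q) P ->
  1 <= pi <= length P -> period P pi -> (forall t, 1 <= t < pi -> ~ period P t) ->
  let s0 := Nat.max pi (length P - pi + 1) in
  A q P M <= G q P (length P + M) + A q P (M - pi) + (length P - s0) * q ^ (M - s0).
Proof.
  intros Hq Hp HM HP Hpi Hper Hmin s0.
  pose proof (G_ge q P M Hp HP). pose proof (Bad_bound q P pi M Hq Hp HM Hpi Hper Hmin).
  pose proof (filter_length (Bad P) (filter (Good P) (words q M))). unfold A in *. cbv zeta in *. unfold s0 in *. lia.
Qed.
Open Scope R_scope.

Section Seq.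
Variable a : nat -> R.
Hypothesis a_nonneg : forall m, 0 <= a m.
Hypothesis a_mono : forall m, a (S m) <= a m.

Lemma a_mono_k : forall m k, a (m + k)%nat <= a m.
Proof.
  intros m k. induction k as [|k IH].
  - rewrite Nat.add_0_r; lra.
  - replace (m + S k)%nat with (S (m + k)) by lia. specialize (a_mono (m + k)). lra.
Qed.

Lemma a_mono_le : forall m m', (m <= m')%nat -> a m' <= a m.
Proof.
  intros m m' H. replace m' with (m + (m' - m))%nat by lia. apply a_mono_k.
Qed.

Lemma lin (e : R) : 0 <= e -> forall m0 j,
  (forall i, (i < j)%nat -> (1 - 8 * e) * a (m0 + i)%nat <= a (S (m0 + i))) ->
  (1 - 8 * INR j * e) * a m0 <= a (m0 + j)%nat.
Proof.
  intros He m0 j. induction j as [|j IH]; intros H.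
  - simpl. rewrite Nat.add_0_r. lra.
  - assert (H1 := H j (Nat.lt_succ_diag_r j)).
    assert (IH' : (1 - 8 * INR j * e) * a m0 <= a (m0 + j)%nat) by (apply IH; intros; apply H; lia).
    assert (H2 := a_mono_k m0 j). assert (H3 := a_nonneg m0).
    replace (m0 + S j)%nat with (S (m0 + j)) by lia. rewrite S_INR.
    assert (e * a (m0 + j)%nat <= e * a m0) by (apply Rmult_le_compat_l; lra).
    nra.
Qed.

Lemma seq_step (p : nat) (e : R) :
  (1 <= p)%nat -> 0 <= e -> 16 * INR p * e <= 1 -> a 0 <= 1 -> / 4 <= a (p - 1) ->
  (forall m, (p <= S m)%nat -> a m <= a (S m) + e * a (S m - p)%nat) ->
  forall m, (p - 1 <= m)%nat -> (1 - 8 * e) * a m <= a (S m).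
Proof.
  intros Hp He Hpe Ha0 Hap Hstep m. induction m as [m IH] using lt_wf_ind. intros Hm.
  assert (Hlin : forall m0 j, (p - 1 <= m0)%nat -> (m0 + j <= m)%nat ->
            (1 - 8 * INR j * e) * a m0 <= a (m0 + j)%nat).
  { intros m0 j H1 H2. apply lin; auto. intros i Hi. apply IH; lia. }
  assert (Hb : a (S m - p)%nat <= 8 * a m).
  { destruct (Nat.le_gt_cases (S m - p) (p - 1)) as [Hc|Hc].
    - assert (a (S m - p)%nat <= 1) by (pose proof (a_mono_le 0 (S m - p) ltac:(lia)); lra).
      assert (Hl := Hlin (p - 1)%nat (m - (p - 1))%nat ltac:(lia) ltac:(lia)).
      replace (p - 1 + (m - (p - 1)))%nat with m in Hl by lia.
      assert (INR (m - (p - 1)) <= INR p) by (apply le_INR; lia).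
      assert (8 * INR (m - (p - 1)) * e <= 1/2) by nra.
      nra.
    - assert (Hl := Hlin (S m - p)%nat (p - 1)%nat ltac:(lia) ltac:(lia)).
      replace (S m - p + (p - 1))%nat with m in Hl by lia.
      assert (INR (p - 1) <= INR p) by (apply le_INR; lia).
      assert (8 * INR (p - 1) * e <= 1/2) by nra.
      pose proof (a_nonneg (S m - p)). nra. }
  specialize (Hstep m ltac:(lia)). pose proof (a_nonneg m). nra.
Qed.

End Seq.
Open Scope nat_scope.

Lemma base4 q P pi : 2 <= q -> 2 <= length P -> Forall (fun a => a < q) P ->
  1 <= pi <= length P -> period P pi -> (forall t, 1 <= t < pi -> ~ period P t) ->
  4 * length P <= q ^ (Nat.max pi (length P - pi + 1)) ->
  q ^ (length P - 1) <= 4 * A q P (length P - 1).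
Proof.
  intros Hq Hp HP Hpi Hper Hmin H4.
  pose proof (base_bound q P pi ltac:(lia) ltac:(lia) HP Hpi Hper Hmin) as Hb. cbv zeta in Hb.
  pose proof (filter_length (Good P) (words q (length P - 1))) as Hf.
  rewrite words_length in Hf. fold (A q P (length P - 1)) in Hf.
  set (s0 := Nat.max pi (length P - pi + 1)) in *.
  set (p := length P) in *.
  assert (H1 : 2 * q ^ (p - 1 - pi) <= q ^ (p - 1)).
  { destruct (Nat.le_gt_cases pi (p - 1)).
    - replace (p - 1) with ((p - 1 - pi) + pi) at 2 by lia. rewrite Nat.pow_add_r.
      assert (q ^ 1 <= q ^ pi) by (apply Nat.pow_le_mono_r; lia). simpl in *. nia.
    - replace (p - 1 - pi) with 0 by lia. simpl.
      assert (q ^ 1 <= q ^ (p - 1)) by (apply Nat.pow_le_mono_r; lia). simpl in *. lia. }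
  assert (H2 : 4 * ((p - s0) * q ^ (p - 1 - s0)) <= q ^ (p - 1)).
  { destruct (Nat.le_gt_cases p s0).
    - replace (p - s0) with 0 by lia. lia.
    - replace (p - 1) with ((p - 1 - s0) + s0) at 2 by lia. rewrite Nat.pow_add_r. nia. }
  lia.
Qed.

Definition aseq q P m : R := INR (A q P m) / INR q ^ m.

Lemma aseq_nonneg q P m : 2 <= q -> (0 <= aseq q P m)%R.
Proof.
  intros Hq. unfold aseq. unfold Rdiv. apply Rmult_le_pos; [apply pos_INR|]. apply Rlt_le, Rinv_0_lt_compat.
  apply pow_lt. apply lt_0_INR; lia.
Qed.

Lemma aseq_mono q P m : 2 <= q -> (aseq q P (S m) <= aseq q P m)%R.
Proof.
  intros Hq. unfold aseq. pose proof (A_step_up q P m) as H.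
  apply le_INR in H. rewrite mult_INR in H.
  assert (Hq0 : (0 < INR q)%R) by (apply lt_0_INR; lia).
  assert (Hqm : (0 < INR q ^ m)%R) by (apply pow_lt; auto).
  simpl. unfold Rdiv. rewrite Rinv_mult.
  apply (Rmult_le_reg_r (INR q * INR q ^ m)); [nra|].
  field_simplify; try lra.
Qed.

Lemma aseq_step q P m : 2 <= q -> 1 <= length P -> length P <= S m ->
  (aseq q P m <= aseq q P (S m) + / INR q ^ length P * aseq q P (S m - length P))%R.
Proof.
  intros Hq Hp Hm. unfold aseq. pose proof (A_step_down q P m Hp Hm) as H.
  apply le_INR in H. rewrite mult_INR, plus_INR in H.
  assert (Hq0 : (0 < INR q)%R) by (apply lt_0_INR; lia).
  assert (Hqm : (0 < INR q ^ m)%R) by (apply pow_lt; auto).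
  assert (Hqp : (0 < INR q ^ length P)%R) by (apply pow_lt; auto).
  assert (Hqr : (0 < INR q ^ (S m - length P))%R) by (apply pow_lt; auto).
  assert (E : (INR q ^ (S m) = INR q ^ length P * INR q ^ (S m - length P))%R).
  { rewrite <- pow_add. f_equal. lia. }
  assert (E2 : (INR q ^ (S m) = INR q * INR q ^ m)%R) by reflexivity.
  apply (Rmult_le_reg_r (INR q ^ S m)); [apply pow_lt; auto|].
  rewrite Rmult_plus_distr_r.
  replace (INR (A q P m) / INR q ^ m * INR q ^ S m)%R with (INR q * INR (A q P m))%R
    by (rewrite E2; field; lra).
  replace (INR (A q P (S m)) / INR q ^ S m * INR q ^ S m)%R with (INR (A q P (S m)))
    by (field; apply pow_nonzero; lra).
  replace (/ INR q ^ length P * (INR (A q P (S m - length P)) / INR q ^ (S m - length P)) *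
     INR q ^ S m)%R with (INR (A q P (S m - length P))) by (rewrite E; field; lra).
  lra.
Qed.
Open Scope nat_scope.

Lemma chunk_iter (a : nat -> R) m0 L :
  (forall m, m0 <= m -> (/ 2 * a m <= a (m + L)%nat)%R) ->
  forall k, ((/ 2) ^ k * a m0 <= a (m0 + k * L)%nat)%R.
Proof.
  intros H k. induction k as [|k IH].
  - simpl. rewrite Nat.add_0_r. lra.
  - replace (m0 + S k * L) with ((m0 + k * L) + L) by lia.
    specialize (H (m0 + k * L) ltac:(lia)). simpl. lra.
Qed.

Lemma main_bound q P N : 2 <= q -> Forall (fun a => a < q) P -> 4 <= length P ->
  64 * length P <= q ^ length P ->
  (forall s, length P + 1 <= 2 * s -> 32 * 2 ^ (q ^ 5) * length P <= q ^ s) ->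
  3 * length P <= N -> N < q ^ (length P + 1) ->
  (INR q ^ (N - length P)%nat / (20 * 2 ^ (q ^ 5)) <= INR (G q P N))%R.
Proof.
  intros Hq HP Hp4 Hqp Hs HN3 HNq.
  set (p := length P) in *.
  destruct (min_period P ltac:(lia)) as [pi [Hpi [Hper Hmin]]].
  set (s0 := Nat.max pi (p - pi + 1)).
  assert (Hs0 : 32 * 2 ^ (q ^ 5) * p <= q ^ s0) by (apply Hs; unfold s0; lia).
  assert (H2X : 1 <= 2 ^ (q ^ 5)) by (apply Nat.pow_le_mono_r with (b := 0); lia).
  set (a := aseq q P).
  set (e := (/ INR q ^ p)%R).
  assert (anon : forall m, (0 <= a m)%R) by (intros; apply aseq_nonneg; auto).
  assert (Hq0 : (0 < INR q)%R) by (apply lt_0_INR; lia).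
  assert (Hq2 : (2 <= INR q)%R) by (apply (le_INR 2); lia).
  assert (Hqp0 : (0 < INR q ^ p)%R) by (apply pow_lt; auto).
  assert (He0 : (0 <= e)%R) by (unfold e; apply Rlt_le, Rinv_0_lt_compat; auto).
  assert (Hpe : (64 * INR p * e <= 1)%R).
  { apply le_INR in Hqp. rewrite mult_INR, pow_INR in Hqp. simpl in Hqp.
    unfold e. apply (Rmult_le_reg_r (INR q ^ p)); auto.
    rewrite Rmult_assoc, Rinv_l by lra. lra. }
  assert (Ha0 : (a 0%nat <= 1)%R) by (unfold a, aseq; simpl; lra).
  assert (Hap : (/ 4 <= a (p - 1)%nat)%R).
  { assert (H4p : 4 * length P <= q ^ (Nat.max pi (length P - pi + 1))).
    { fold p s0. nia. }
    pose proof (base4 q P pi Hq ltac:(unfold p in *; lia) HP Hpi Hper Hmin H4p) as Hb. fold p in Hb.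
    apply le_INR in Hb. rewrite mult_INR, pow_INR in Hb. simpl in Hb.
    unfold a, aseq. assert (0 < INR q ^ (p - 1))%R by (apply pow_lt; auto).
    apply (Rmult_le_reg_r (INR q ^ (p - 1))); auto.
    unfold Rdiv. rewrite Rmult_assoc, Rinv_l by lra. lra. }
  assert (Hstep : forall m, p <= S m -> (a m <= a (S m) + e * a (S m - p)%nat)%R).
  { intros m Hm. unfold a, e. apply aseq_step; lia. }
  assert (R1 : forall m, p - 1 <= m -> ((1 - 8 * e) * a m <= a (S m))%R).
  { apply (seq_step a (fun m => aseq_nonneg q P m Hq) (fun m => aseq_mono q P m Hq) p e); auto.
    lia. lra. }
  assert (Hlin : forall m0 j, p - 1 <= m0 -> ((1 - 8 * INR j * e) * a m0 <= a (m0 + j)%nat)%R).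
  { intros m0 j Hm0. apply (lin a (fun m => aseq_nonneg q P m Hq) (fun m => aseq_mono q P m Hq) e He0).
    intros i Hi. apply R1. lia. }
  set (L := q ^ (p - 4)).
  assert (HL : (8 * INR L * e <= / 2)%R).
  { unfold L, e. rewrite pow_INR.
    assert (E : (INR q ^ p = INR q ^ (p - 4) * INR q ^ 4)%R) by (rewrite <- pow_add; f_equal; lia).
    rewrite E. assert (0 < INR q ^ (p - 4))%R by (apply pow_lt; auto).
    assert (16 <= INR q ^ 4)%R.
    { replace 16%R with (2 ^ 4)%R by lra. apply pow_incr; lra. }
    rewrite Rinv_mult. 
    replace (8 * INR q ^ (p - 4) * (/ INR q ^ (p - 4) * / INR q ^ 4))%R with (8 * / INR q ^ 4)%R
      by (field; repeat split; try apply pow_nonzero; lra).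
    apply (Rmult_le_reg_r (INR q ^ 4)); [lra|].
    rewrite Rmult_assoc, Rinv_l by lra. lra. }
  assert (Hchunk : forall m, p - 1 <= m -> (/ 2 * a m <= a (m + L)%nat)%R).
  { intros m Hm. pose proof (Hlin m L Hm). pose proof (anon m). nra. }
  set (M := N - p).
  assert (HaM : (/ 4 * (/ 2) ^ (q ^ 5) <= a M)%R).
  { pose proof (chunk_iter a (p - 1) L Hchunk (q ^ 5)) as Hc.
    assert (HML : M <= p - 1 + q ^ 5 * L).
    { unfold M, L. rewrite <- Nat.pow_add_r. replace (5 + (p - 4)) with (p + 1) by lia. lia. }
    pose proof (a_mono_le a (fun m => aseq_mono q P m Hq) M (p - 1 + q ^ 5 * L) HML).
    assert (0 <= (/2) ^ (q ^ 5))%R by (apply pow_le; lra). nra. }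
  assert (HaMpi : (7 * a (M - pi)%nat <= 8 * a M)%R).
  { pose proof (Hlin (M - pi) pi ltac:(unfold M; lia)) as H.
    replace (M - pi + pi) with M in H by (unfold M; lia).
    assert (INR pi <= INR p)%R by (apply le_INR; lia).
    pose proof (anon (M - pi)).
    assert (Hpe8 : (8 * INR pi * e <= / 8)%R) by nra.
    assert ((8 * INR pi * e) * a (M - pi)%nat <= / 8 * a (M - pi)%nat)%R by (apply Rmult_le_compat_r; lra).
    lra. }
  pose proof (G_lower q P pi M ltac:(lia) ltac:(lia) ltac:(unfold M; lia) HP Hpi Hper Hmin) as HG.
  cbv zeta in HG. fold p s0 in HG.
  replace (p + M) with N in HG by (unfold M; lia).
  apply le_INR in HG. rewrite !plus_INR, mult_INR, pow_INR in HG.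
  assert (EA : forall m, INR (A q P m) = (a m * INR q ^ m)%R).
  { intros m. unfold a, aseq. field. apply pow_nonzero; lra. }
  rewrite !EA in HG.
  assert (HqM : (0 < INR q ^ M)%R) by (apply pow_lt; auto).
  assert (Epi : (INR q ^ M = INR q ^ (M - pi) * INR q ^ pi)%R) by (rewrite <- pow_add; f_equal; unfold M; lia).
  assert (Hqpi : (2 <= INR q ^ pi)%R).
  { replace 2%R with (2 ^ 1)%R by lra. apply Rle_trans with (INR q ^ 1)%R; [apply pow_incr; lra|].
    apply Rle_pow; [lra|lia]. }
  assert (Hqpi0 : (0 < INR q ^ (M - pi))%R) by (apply pow_lt; auto).
  assert (T1 : (7 * (a (M - pi)%nat * INR q ^ (M - pi)) <= 4 * (a M * INR q ^ M))%R).
  { rewrite Epi. pose proof (anon (M - pi)).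
    assert (0 <= a (M - pi)%nat * INR q ^ (M - pi))%R by nra. nra. }
  assert (T2 : (INR (p - s0) * INR q ^ (M - s0) * (32 * 2 ^ (q ^ 5)) <= INR q ^ M)%R).
  { assert (Hle : (p - s0) * q ^ (M - s0) * (32 * 2 ^ (q ^ 5)) <= q ^ M).
    { replace M with ((M - s0) + s0) at 2 by (unfold M, s0; lia). rewrite Nat.pow_add_r.
      assert (Hc : (p - s0) * (32 * 2 ^ (q ^ 5)) <= q ^ s0).
      { apply Nat.le_trans with (p * (32 * 2 ^ (q ^ 5))); [apply Nat.mul_le_mono_r; lia|]. lia. }
      replace ((p - s0) * q ^ (M - s0) * (32 * 2 ^ q ^ 5)) with (q ^ (M - s0) * ((p - s0) * (32 * 2 ^ q ^ 5))) by ring.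
      apply Nat.mul_le_mono_l. exact Hc. }
    apply le_INR in Hle. rewrite !mult_INR, !pow_INR in Hle.
    replace (INR 32) with 32%R in Hle by (simpl; lra).
    replace (INR 2) with 2%R in Hle by (simpl; lra). exact Hle. }
  assert (HX : (1 <= 2 ^ (q ^ 5))%R) by (apply pow_R1_Rle; lra).
  unfold M in *.
  assert (Hinv : (/ 4 * (/ 2) ^ (q ^ 5) = / (4 * 2 ^ (q ^ 5)))%R).
  { rewrite pow_inv. field. apply pow_nonzero; lra. }
  rewrite Hinv in HaM.
  set (X := (2 ^ (q ^ 5))%R) in *.
  set (QM := (INR q ^ (N - p))%R) in *.
  assert (HaMX : (1 <= a (N - p)%nat * (4 * X))%R).
  { apply (Rmult_le_compat_r (4 * X)) in HaM; [|lra]. rewrite Rinv_l in HaM by lra. lra. }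
  apply (Rmult_le_reg_r (20 * X)); [lra|].
  unfold Rdiv. rewrite Rmult_assoc, Rinv_l by lra. rewrite Rmult_1_r.
  nra.
Qed.
Open Scope R_scope.

Lemma sq_le_pow2 n : (4 <= n)%nat -> (n * n <= 2 ^ n)%nat.
Proof.
  induction n as [|n IH]; intros H; [lia|].
  destruct (Nat.eq_dec n 3) as [->|Hn]; [simpl; lia|].
  assert (n * n <= 2 ^ n)%nat by (apply IH; lia). rewrite Nat.pow_succ_r'. nia.
Qed.

Lemma nat_arch (r : R) : exists K : nat, r <= INR K.
Proof.
  destruct (archimed r) as [H1 _].
  destruct (Z_le_gt_dec 0 (up r)) as [Hz|Hz].
  - exists (Z.to_nat (up r)). rewrite INR_IZR_INZ, Z2Nat.id by lia. lra.
  - exists 0%nat. simpl. apply Z.gt_lt in Hz. apply IZR_lt in Hz. lra.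
Qed.

Theorem lemma5 (q : nat) (hq : (2 <= q)%nat) :
  exists (N0 : nat) (d : R), 0 < d /\
    forall (N p : nat) (P : list nat),
      (N > N0)%nat ->
      ln (INR q) / (INR q - 1) * INR q ^ p <= INR N ->
      INR N < ln (INR q) / (INR q - 1) * INR q ^ (p + 1) ->
      length P = p ->
      Forall (fun a => (a < q)%nat) P ->
      INR (G q P N) >= d * INR q ^ (N + p) / (INR (N + p)) ^ 2.
Proof.
  assert (Hq2 : 2 <= INR q) by (apply (le_INR 2); lia).
  set (c := ln (INR q) / (INR q - 1)).
  assert (Hln : 0 < ln (INR q)).
  { rewrite <- ln_1. apply ln_increasing; lra. }
  assert (Hln2 : ln (INR q) <= INR q - 1).
  { pose proof (exp_ineq1 (ln (INR q)) ltac:(lra)). rewrite exp_ln in H by lra. lra. }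
  assert (Hc0 : 0 < c) by (unfold c; apply Rdiv_lt_0_compat; lra).
  assert (Hc1 : c <= 1).
  { unfold c. apply (Rmult_le_reg_r (INR q - 1)); [lra|].
    unfold Rdiv. rewrite Rmult_assoc, Rinv_l by lra. lra. }
  destruct (nat_arch (3 / c)) as [K HK].
  set (X := (2 ^ (q ^ 5))%nat).
  assert (HX1 : (1 <= X)%nat) by (apply Nat.pow_le_mono_r with (b := 0%nat); lia).
  set (p0 := (128 * X + K + 64)%nat).
  exists (q ^ (p0 + 1))%nat, (c ^ 2 / (20 * 2 ^ (q ^ 5))).
  split.
  { apply Rdiv_lt_0_compat. apply pow_lt; lra. assert (0 < 2 ^ (q ^ 5)) by (apply pow_lt; lra). lra. }
  intros N p P HN Hlo Hhi HPl HP.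
  assert (Hqp : 0 < INR q ^ p) by (apply pow_lt; lra).
  assert (HNq : (N < q ^ (p + 1))%nat).
  { apply INR_lt. rewrite pow_INR. fold c in Hhi.
    assert (0 < INR q ^ (p + 1)) by (apply pow_lt; lra). nra. }
  assert (Hpp0 : (p0 < p)%nat).
  { assert (H : (q ^ (p0 + 1) < q ^ (p + 1))%nat) by lia.
    apply Nat.pow_lt_mono_r_iff in H; lia. }
  assert (Hsq : forall n, (4 <= n)%nat -> (n * n <= q ^ n)%nat).
  { intros n Hn. eapply Nat.le_trans; [apply sq_le_pow2; auto|]. apply Nat.pow_le_mono_l; lia. }
  assert (Hc64 : (64 * p <= q ^ p)%nat).
  { pose proof (Hsq p ltac:(lia)). nia. }
  assert (Hs : forall s, (p + 1 <= 2 * s)%nat -> (32 * 2 ^ (q ^ 5) * p <= q ^ s)%nat).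
  { intros s Hs. fold X. pose proof (Hsq s ltac:(lia)).
    assert (64 * X <= s)%nat by lia. nia. }
  assert (HN3 : (3 * p <= N)%nat).
  { apply INR_le. fold c in Hlo. pose proof (Hsq p ltac:(lia)) as Hpp.
    apply le_INR in Hpp. rewrite mult_INR, pow_INR in Hpp.
    assert (HKp : INR K <= INR p) by (apply le_INR; lia).
    assert (H3 : 3 <= c * INR p).
    { apply (Rmult_le_compat_l c) in HK; [|lra]. unfold Rdiv in HK.
      rewrite <- Rmult_assoc, (Rmult_comm c 3), Rmult_assoc, Rinv_r in HK by lra. nra. }
    rewrite mult_INR. replace (INR 3) with 3 by (simpl; lra).
    assert (0 <= INR p) by apply pos_INR. nra. }
  subst p.
  pose proof (main_bound q P N hq HP ltac:(lia) Hc64 Hs HN3 HNq) as HM.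
  set (p := length P) in *.
  set (Y := 2 ^ (q ^ 5)) in *.
  assert (HY : 0 < Y) by (apply pow_lt; lra).
  assert (E : INR q ^ (N + p) = INR q ^ (N - p) * (INR q ^ p * INR q ^ p)).
  { rewrite <- !pow_add. f_equal. lia. }
  assert (HNp : c * INR q ^ p <= INR (N + p)).
  { rewrite plus_INR. pose proof (pos_INR p). lra. }
  assert (Hcq : 0 < c * INR q ^ p) by (apply Rmult_lt_0_compat; lra).
  assert (Hsq2 : (c * INR q ^ p) ^ 2 <= INR (N + p) ^ 2).
  { apply pow_incr. lra. }
  assert (HQ : 0 < INR q ^ (N - p)) by (apply pow_lt; lra).
  apply Rle_ge. eapply Rle_trans; [|exact HM].
  rewrite E.
  assert (Hpos : 0 < INR (N + p) ^ 2) by (apply pow_lt; lra).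
  unfold Rdiv.
  apply (Rmult_le_reg_r (INR (N + p) ^ 2)); auto.
  replace (c ^ 2 * / (20 * Y) * (INR q ^ (N - p) * (INR q ^ p * INR q ^ p)) * / INR (N + p) ^ 2 *
     INR (N + p) ^ 2) with (INR q ^ (N - p) * / (20 * Y) * (c * INR q ^ p) ^ 2)
    by (field; lra).
  apply Rmult_le_compat_l; [|exact Hsq2].
  apply Rmult_le_pos; [lra|]. apply Rlt_le, Rinv_0_lt_compat. lra.
Qed.
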